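(* There exists a system of $78$ distinct lines through the origin in $\mathbb{R}^{11}$ whose angle set is $\{\tfrac13,\tfrac{1}{\sqrt{11}},\tfrac{1}{11},0\}$; in particular its coherence is $\tfrac13$.
   Context: For a line system $(l_j)_{j\in S}$ with unit vectors $\phi_j$ spanning $l_j$, the angle set is $\{|\langle\phi_i,\phi_j\rangle| : i\neq j\}$ and the coherence is the maximum of the angle set. *)

(* Defs.v *)
From HB Require Import structures.
From mathcomp Require Import all_boot all_order all_algebra.
From mathcomp Require Import reals.
Set Implicit Arguments. Unset Strict Implicit. Unset Printing Implicit Defensive.
Import Order.TTheory GRing.Theory Num.Theory.
Local Open Scope ring_scope.

Definition dotp (R : realType) (d : nat) (u v : 'rV[R]_d) : R :=
  \sum_(k < d) u 0 k * v 0 k.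

Definition unit_spanning_distinct_lines (R : realType) (n d : nat)
    (phi : 'I_n -> 'rV[R]_d) : Prop :=
  (forall j, dotp (phi j) (phi j) = 1) /\
  (forall i j, (phi i == phi j)%MS -> i = j).

Definition angle_set (R : realType) (n d : nat) (phi : 'I_n -> 'rV[R]_d)
  : R -> Prop :=
  fun x => exists i j : 'I_n, i != j /\ x = `|dotp (phi i) (phi j)|.

(* Coherence: the maximum of the angle set (all entries are >= 0, so 0 is a
   harmless default for the iterated max). *)
Definition coherence (R : realType) (n d : nat) (phi : 'I_n -> 'rV[R]_d) : R :=
  \big[Num.max/0]_(ij : 'I_n * 'I_n | ij.1 != ij.2)
     `|dotp (phi ij.1) (phi ij.2)|.

(* Main.v *)
Require Import Defs.
From HB Require Import structures.
From mathcomp Require Import all_boot all_order all_algebra.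
From mathcomp Require Import reals.
From mathcomp Require Import ring lra.
Import Order.TTheory GRing.Theory Num.Theory.
Local Open Scope ring_scope.

Definition data : seq (seq nat) := [::
  [:: 1; 1; 1; 1; 1; 1; 1; 1; 1; 1; 1];
  [:: 2; 2; 1; 2; 2; 2; 1; 1; 1; 2; 1];
  [:: 1; 2; 2; 1; 2; 2; 2; 1; 1; 1; 2];
  [:: 2; 1; 2; 2; 1; 2; 2; 2; 1; 1; 1];
  [:: 1; 2; 1; 2; 2; 1; 2; 2; 2; 1; 1];
  [:: 1; 1; 2; 1; 2; 2; 1; 2; 2; 2; 1];
  [:: 1; 1; 1; 2; 1; 2; 2; 1; 2; 2; 2];
  [:: 2; 1; 1; 1; 2; 1; 2; 2; 1; 2; 2];
  [:: 2; 2; 1; 1; 1; 2; 1; 2; 2; 1; 2];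
  [:: 2; 2; 2; 1; 1; 1; 2; 1; 2; 2; 1];
  [:: 1; 2; 2; 2; 1; 1; 1; 2; 1; 2; 2];
  [:: 2; 1; 2; 2; 2; 1; 1; 1; 2; 1; 2];
  [:: 1; 0; 0; 0; 0; 0; 0; 0; 0; 0; 0];
  [:: 0; 1; 0; 0; 0; 0; 0; 0; 0; 0; 0];
  [:: 0; 0; 1; 0; 0; 0; 0; 0; 0; 0; 0];
  [:: 0; 0; 0; 1; 0; 0; 0; 0; 0; 0; 0];
  [:: 0; 0; 0; 0; 1; 0; 0; 0; 0; 0; 0];
  [:: 0; 0; 0; 0; 0; 1; 0; 0; 0; 0; 0];
  [:: 0; 0; 0; 0; 0; 0; 1; 0; 0; 0; 0];
  [:: 0; 0; 0; 0; 0; 0; 0; 1; 0; 0; 0];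
  [:: 0; 0; 0; 0; 0; 0; 0; 0; 1; 0; 0];
  [:: 0; 0; 0; 0; 0; 0; 0; 0; 0; 1; 0];
  [:: 0; 0; 0; 0; 0; 0; 0; 0; 0; 0; 1];
  [:: 0; 0; 1; 1; 1; 2; 1; 1; 2; 2; 1];
  [:: 0; 1; 0; 2; 1; 1; 2; 1; 2; 1; 1];
  [:: 0; 1; 2; 0; 2; 2; 1; 1; 1; 1; 1];
  [:: 0; 1; 1; 2; 0; 1; 1; 1; 1; 2; 2];
  [:: 0; 1; 2; 1; 2; 0; 2; 1; 2; 2; 2];
  [:: 0; 1; 2; 1; 1; 1; 0; 2; 1; 2; 1];
  [:: 0; 1; 1; 1; 1; 2; 2; 0; 1; 1; 2];
  [:: 0; 1; 1; 2; 2; 2; 2; 2; 0; 2; 1];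
  [:: 0; 1; 2; 2; 1; 2; 1; 2; 2; 0; 2];
  [:: 0; 1; 1; 1; 2; 1; 1; 2; 2; 1; 0];
  [:: 1; 0; 0; 1; 1; 1; 2; 1; 1; 2; 2];
  [:: 1; 0; 1; 0; 2; 1; 1; 2; 1; 2; 1];
  [:: 1; 0; 1; 2; 0; 2; 2; 1; 1; 1; 1];
  [:: 1; 0; 2; 2; 1; 0; 2; 2; 2; 2; 1];
  [:: 1; 0; 2; 1; 2; 1; 0; 1; 2; 1; 1];
  [:: 1; 0; 1; 2; 1; 1; 1; 0; 2; 1; 2];
  [:: 1; 0; 2; 2; 2; 2; 1; 1; 0; 2; 2];
  [:: 1; 0; 1; 1; 2; 2; 2; 2; 2; 0; 2];
  [:: 1; 0; 2; 1; 1; 2; 1; 2; 1; 1; 0];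
  [:: 1; 2; 0; 0; 2; 2; 2; 1; 2; 2; 1];
  [:: 1; 1; 0; 1; 0; 2; 1; 1; 2; 1; 2];
  [:: 1; 1; 0; 1; 2; 0; 2; 2; 1; 1; 1];
  [:: 1; 1; 0; 2; 2; 1; 0; 2; 2; 2; 2];
  [:: 1; 1; 0; 2; 1; 2; 1; 0; 1; 2; 1];
  [:: 1; 2; 0; 2; 1; 2; 2; 2; 0; 1; 2];
  [:: 1; 2; 0; 1; 1; 1; 1; 2; 2; 0; 1];
  [:: 1; 2; 0; 2; 2; 1; 1; 1; 1; 1; 0];
  [:: 1; 1; 2; 0; 0; 2; 2; 2; 1; 2; 2];
  [:: 1; 2; 2; 0; 2; 0; 1; 2; 2; 1; 2];
  [:: 1; 1; 1; 0; 1; 2; 0; 2; 2; 1; 1];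
  [:: 1; 2; 2; 0; 1; 1; 2; 0; 1; 1; 1];
  [:: 1; 1; 1; 0; 2; 1; 2; 1; 0; 1; 2];
  [:: 1; 2; 1; 0; 1; 2; 1; 1; 1; 0; 2];
  [:: 1; 1; 2; 0; 1; 1; 1; 1; 2; 2; 0];
  [:: 1; 2; 2; 1; 0; 0; 1; 1; 1; 2; 1];
  [:: 1; 2; 1; 1; 0; 1; 0; 2; 1; 1; 2];
  [:: 1; 1; 1; 1; 0; 1; 2; 0; 2; 2; 1];
  [:: 1; 1; 2; 2; 0; 1; 1; 2; 0; 1; 1];
  [:: 1; 2; 2; 2; 0; 1; 2; 1; 2; 0; 2];
  [:: 1; 2; 1; 2; 0; 2; 1; 2; 2; 2; 0];
  [:: 1; 1; 2; 2; 1; 0; 0; 1; 1; 1; 2];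
  [:: 1; 2; 1; 2; 2; 0; 2; 0; 1; 2; 2];
  [:: 1; 1; 1; 1; 1; 0; 1; 2; 0; 2; 2];
  [:: 1; 1; 1; 2; 2; 0; 1; 1; 2; 0; 1];
  [:: 1; 2; 1; 1; 1; 0; 2; 1; 2; 1; 0];
  [:: 1; 2; 2; 1; 1; 2; 0; 0; 2; 2; 2];
  [:: 1; 2; 1; 2; 1; 1; 0; 1; 0; 2; 1];
  [:: 1; 2; 2; 2; 2; 2; 0; 2; 1; 0; 1];
  [:: 1; 1; 1; 1; 2; 2; 0; 1; 1; 2; 0];
  [:: 1; 2; 1; 1; 2; 2; 1; 0; 0; 1; 1];
  [:: 1; 1; 2; 1; 2; 1; 1; 0; 1; 0; 2];
  [:: 1; 1; 2; 2; 2; 2; 2; 0; 2; 1; 0];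
  [:: 1; 1; 2; 1; 1; 2; 2; 1; 0; 0; 1];
  [:: 1; 2; 2; 1; 2; 1; 2; 2; 0; 2; 0];
  [:: 1; 1; 1; 2; 1; 1; 2; 2; 1; 0; 0]
].

Definition dec (c : nat) : int := if c == 0%N then 0 else if c == 1%N then 1 else -1.
Definition Mn (i k : nat) : int := dec (nth 0%N (nth [::] data i) k).
Definition Dn (i j : nat) : int :=
  foldr (fun k acc => Mn i k * Mn j k + acc) 0 (iota 0 11).
Definition ty (n : nat) : nat := if (n < 12)%N then 0%N else if (n < 23)%N then 1%N else 2%N.
Definition nrm (t : nat) : nat := if t == 0%N then 11%N else if t == 1%N then 1%N else 9%N.
Definition allowed (t u : nat) : seq nat :=
  match t, u with
  | 0, 0 => [:: 1%N]
  | 0, 1 | 1, 0 => [:: 1%N]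
  | 0, _ | _, 0 => [:: 3%N]
  | 1, 1 => [:: 0%N]
  | 1, _ | _, 1 => [:: 0%N; 1%N]
  | _, _ => [:: 0%N; 3%N]
  end%N.
Definition okn (i j : nat) : bool :=
  if i == j then Dn i j == (nrm (ty i))%:Z
  else (absz (Dn i j) \in allowed (ty i) (ty j)).

Lemma check_all : all (fun i => all (fun j => okn i j) (iota 0 78)) (iota 0 78).
Proof. vm_compute. reflexivity. Qed.

Lemma okij (i j : 'I_78) : okn i j.
Proof.
have /allP /(_ (nat_of_ord i)) := check_all.
rewrite mem_iota ltn_ord => /(_ isT) /allP /(_ (nat_of_ord j)).
by rewrite mem_iota ltn_ord => /(_ isT).
Qed.

Lemma Dn_sum i j : Dn i j = \sum_(k <- iota 0 11) Mn i k * Mn j k.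
Proof.
rewrite /Dn; elim: (iota 0 11) => [|x s IH] /=; by rewrite ?big_nil ?big_cons ?IH.
Qed.

Lemma ty_lt3 n : (ty n < 3)%N.
Proof. by rewrite /ty; case: ifP => //; case: ifP. Qed.

Section Real.
Variable R : realType.
Definition s : R := Num.sqrt 11%:R.
Lemma s2 : s * s = 11%:R.
Proof. by rewrite -expr2 sqr_sqrtr // ler0n. Qed.
Lemma s_ge0 : 0 <= s. Proof. exact: sqrtr_ge0. Qed.
Lemma s_gt3 : 3%:R < s.
Proof. have := s2; have := s_ge0; nra. Qed.
Lemma s_gt0 : 0 < s. Proof. have := s_gt3; lra. Qed.
Lemma s_neq0 : s != 0. Proof. by rewrite gt_eqF // s_gt0. Qed.

Definition scv (t : nat) : R := if t == 0%N then s^-1 else if t == 1%N then 1 else 3%:R^-1.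
Definition phi (i : 'I_78) : 'rV[R]_11 := scv (ty i) *: \row_k ((Mn i k)%:~R).

Lemma scv_ge0 t : 0 <= scv t.
Proof. rewrite /scv; case: ifP => _; first by rewrite invr_ge0 s_ge0.
by case: ifP => _ //; rewrite invr_ge0 ler0n. Qed.

Lemma dot_phi i j : dotp (phi i) (phi j) = scv (ty i) * scv (ty j) * (Dn i j)%:~R.
Proof.
rewrite /dotp /phi Dn_sum rmorph_sum mulr_sumr /=.
transitivity (\sum_(k < 11) (fun k : nat => scv (ty i) * (Mn i k)%:~R * (scv (ty j) * (Mn j k)%:~R)) k).
  by apply: eq_bigr => k _; rewrite !mxE.
rewrite -(big_mkord xpredT (fun k : nat => scv (ty i) * (Mn i k)%:~R * (scv (ty j) * (Mn j k)%:~R))).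
rewrite /index_iota subn0; apply: eq_bigr => k _; rewrite intrM; ring.
Qed.

Lemma abs_dot i j : `|dotp (phi i) (phi j)| = scv (ty i) * scv (ty j) * (absz (Dn i j))%:R.
Proof.
rewrite dot_phi !normrM -intr_norm (ger0_norm (scv_ge0 _)) (ger0_norm (scv_ge0 _)).
by rewrite -abszE.
Qed.

Definition SS (x : R) := x = 3%:R^-1 \/ x = s^-1 \/ x = 11%:R^-1 \/ x = 0.

Lemma angle_ok (t u a : nat) : (t < 3)%N -> (u < 3)%N -> a \in allowed t u ->
  SS (scv t * scv u * a%:R).
Proof.
rewrite /SS /scv.
case: t => [|[|[|t]]] //; case: u => [|[|[|u]]] // _ _; rewrite /allowed !inE /=.
- move/eqP->; right; right; left; by rewrite mulr1 -invfM s2.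
- move/eqP->; right; left; by rewrite !mulr1.
- move/eqP->; right; left; rewrite -mulrA mulVf ?mulr1 //; by rewrite pnatr_eq0.
- move/eqP->; right; left; by rewrite !mulr1 mul1r.
- move/eqP->; by right; right; right; rewrite mulr0.
- case/orP=> /eqP->; first by right; right; right; rewrite mulr0.
  by left; rewrite !mul1r mulr1.
- move/eqP->; right; left; rewrite mulrC mulrA mulfV ?mul1r //; by rewrite pnatr_eq0.
- case/orP=> /eqP->; first by right; right; right; rewrite mulr0.
  by left; rewrite !mulr1.
- case/orP=> /eqP->; first by right; right; right; rewrite mulr0.
  by left; rewrite -mulrA mulVf ?mulr1 // pnatr_eq0.
Qed.

Lemma angle_pair (i j : 'I_78) : i != j -> SS `|dotp (phi i) (phi j)|.
Proof.
move=> Hij; rewrite abs_dot; apply: angle_ok; rewrite ?ty_lt3 //.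
have H' : (nat_of_ord i == nat_of_ord j) = false by apply/negbTE.
by have := okij i j; rewrite /okn H'.
Qed.

Lemma SS_lt1 x : SS x -> x < 1.
Proof.
have := s_gt3 => h.
case=> [->|[->|[->|->]]] //.
- by rewrite invf_lt1 ?ltr0n // ltr1n.
- by rewrite invf_lt1; lra.
- by rewrite invf_lt1 ?ltr0n // ltr1n.
Qed.

Lemma SS_le x : SS x -> x <= 3%:R^-1.
Proof.
have := s_gt3 => h.
case=> [->|[->|[->|->]]] //.
- by rewrite lef_pV2 ?posrE ?ltr0n //; lra.
- by rewrite lef_pV2 ?posrE ?ltr0n // ler_nat.
- by rewrite invr_ge0 ler0n.
Qed.

Lemma dotZl (a : R) (u v : 'rV[R]_11) : dotp (a *: u) v = a * dotp u v.
Proof. rewrite /dotp mulr_sumr; apply: eq_bigr => k _; rewrite mxE mulrA //. Qed.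

Lemma dotC (u v : 'rV[R]_11) : dotp u v = dotp v u.
Proof. by apply: eq_bigr => k _; rewrite mulrC. Qed.

Lemma norm_phi i : dotp (phi i) (phi i) = 1.
Proof.
rewrite dot_phi; have := okij i i; rewrite /okn eqxx => /eqP ->.
rewrite /scv /nrm; have := ty_lt3 i.
case: (ty i) => [|[|[|t]]] //= _.
- by rewrite -invfM s2 mulVf // pnatr_eq0.
- by rewrite !mul1r.
- by rewrite -invfM -natrM; apply: mulVf; rewrite pnatr_eq0.
Qed.

End Real.
Arguments phi {R} i.
Arguments scv {R} t.
Arguments s {R}.
Arguments SS {R} x.
Arguments norm_phi {R} i.
Arguments angle_pair {R} i j.
Arguments SS_lt1 {R} x.
Arguments SS_le {R} x.
Arguments abs_dot {R} i j.
Arguments dotZl {R} a u v.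
Arguments s2 {R}.

Theorem mainTheorem9 (R : realType) :
  exists phi : 'I_78 -> 'rV[R]_11,
    unit_spanning_distinct_lines phi /\
    (forall x : R, angle_set phi x <->
       (x = 3%:R^-1 \/ x = (Num.sqrt 11%:R)^-1 \/ x = 11%:R^-1 \/ x = 0)) /\
    coherence phi = 3%:R^-1.
Proof.
exists (@phi R); split.
  split; first exact: norm_phi.
  move=> i j Heq; apply/eqP; apply: contraT => Hij.
  case/andP: Heq => /submxP [D HD] _.
  rewrite (mx11_scalar D) mul_scalar_mx in HD.
  have h1 : dotp (phi i) (phi j) = D 0 0 by rewrite HD dotZl norm_phi mulr1.
  have h0 := @norm_phi R i. rewrite {1}HD dotZl dotC h1 in h0.
  have := @SS_lt1 R _ (@angle_pair R i j Hij); rewrite h1 ltr_norml => /andP [h3 h4].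
  exfalso; clear HD h1; move: (D 0 0) h0 h3 h4 => a h0 h3 h4; nra.
split.
  move=> x; split.
    by case=> i [j [Hij ->]]; exact: angle_pair i j Hij.
  case=> [->|[->|[->|->]]].
  - exists (@Ordinal 78 23 isT), (@Ordinal 78 42 isT); split => //.
    rewrite abs_dot.
    have -> : absz (Dn 23 42) = 3%N by vm_compute.
    rewrite /scv /ty /=. rewrite -mulrA mulVf ?mulr1 // pnatr_eq0 //.
  - exists (@Ordinal 78 0 isT), (@Ordinal 78 12 isT); split => //.
    rewrite abs_dot.
    have -> : absz (Dn 0 12) = 1%N by vm_compute.
    by rewrite /scv /ty /= !mulr1.
  - exists (@Ordinal 78 0 isT), (@Ordinal 78 1 isT); split => //.
    rewrite abs_dot.
    have -> : absz (Dn 0 1) = 1%N by vm_compute.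
    by rewrite /scv /ty /= mulr1 -invfM s2.
  - exists (@Ordinal 78 12 isT), (@Ordinal 78 13 isT); split => //.
    rewrite abs_dot.
    have -> : absz (Dn 12 13) = 0%N by vm_compute.
    by rewrite mulr0.
apply/le_anti/andP; split.
  apply: bigmax_le; first by rewrite invr_ge0 ler0n.
  by move=> [i j] /= Hij; apply: SS_le; apply: angle_pair i j Hij.
have H : `|dotp (phi (@Ordinal 78 23 isT)) (phi (@Ordinal 78 42 isT))| = 3%:R^-1 :> R.
  rewrite abs_dot.
  have -> : absz (Dn 23 42) = 3%N by vm_compute.
  rewrite /scv /ty /=. rewrite -mulrA mulVf ?mulr1 // pnatr_eq0 //.
rewrite -{1}H.
exact: (le_bigmax_cond _ (j := (@Ordinal 78 23 isT, @Ordinal 78 42 isT))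
          (fun ij : 'I_78 * 'I_78 => `|dotp (phi ij.1) (phi ij.2)|)).
Qed.
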